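(* Let $G$ be a cellulation of a closed orientable surface $\Sigma$ (every component of $\Sigma\smallsetminus G$ is an open disk; equivalently $G$ is an orientable ribbon graph), and let $G^*$ be the dual cellulation. Then $\widetilde P_{G^*,\Sigma}(Y,X)$ is obtained from $\widetilde P_{G,\Sigma}(X,Y)$ by replacing each formal coefficient $[V]$ with $[V^{\perp}]$.
   Context: The dual $G^*$ has a vertex for each face of $G$ and, for each edge $e$ of $G$, an edge $e^*$ crossing $e$ once and disjoint from the other edges of $G$. Let $w$ be the intersection form on $H_1(\Sigma;\mathbb R)$ (a symplectic form). For a subspace $V\subset H_1(\Sigma;\mathbb R)$, $V^{\perp}=\{u\in H_1(\Sigma;\mathbb R): w(u,v)=0\ \forall v\in V\}$. To each subspace $V$ associate a formal commuting variable $[V]$. For a graph $G\subset\Sigma$ with inclusion $i$ and spanning subgraph $H\subset G$, let $c(H)$ be the number of components of $H$ and $k(H)=\dim\ker\big(i_*\colon H_1(H;\mathbb R)\to H_1(\Sigma;\mathbb R)\big)$. Define $$\widetilde P_{G,\Sigma}(X,Y)=\sum_{H\subset G}[\,i_*(H_1(H;\mathbb R))\,]\;X^{c(H)-c(G)}\,Y^{k(H)},$$ a polynomial in $X,Y$ with coefficients in the formal variables $[V]$. *)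

(* Defs.v *)
From HB Require Import structures.
From mathcomp Require Import all_boot all_order all_fingroup all_algebra.
From mathcomp Require Import reals.
From mathcomp.multinomials Require Import freeg.
Set Implicit Arguments. Unset Strict Implicit. Unset Printing Implicit Defensive.
Import GRing.Theory.
Local Open Scope ring_scope.

(* Cellulations of closed orientable surfaces as combinatorial maps           *)
(* (= orientable ribbon graphs).                                               *)
(* A map is given by a finite set of darts D, a permutation s (rotation of    *)
(* darts around their vertex) and a fixed-point-free involution a (the two    *)
(* darts of an edge).  Vertices of G = s-orbits, edges = a-orbits, faces =    *)
(* orbits of phi := s \o a.  The dual map Gdual is (D, phi, a): its vertices    *)
(* are the faces of G, its edge e_dual is the a-orbit of e, and its faces are    *)
(* the vertices of G.                                                         *)
(* H_1(Sigma;R) is computed as the cellular homology of the common            *)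
(* subdivision Gamma of G and Gdual (a quadrangulation of Sigma):               *)
(*  0-cells: vertices, edge-midpoints and faces of G;                         *)
(*  1-cells: g_d (= inl d), the half of the edge of d from the vertex of d    *)
(*           to the midpoint of its edge, and h_d (= inr d), the half of the  *)
(*           dual edge from the face of d to the midpoint of the edge of d;   *)
(*  2-cells: one corner c_y per dart y, the quadrilateral                      *)
(*           v(y) - e(y) - f(s y) - e(s y), with boundary                     *)
(*           g_y - h_(a y) + h_(s y) - g_(s y).                               *)
(* G and Gdual are subcomplexes of Gamma.  A subspace of H_1 = Z / B is         *)
(* represented by its preimage in the cycle space Z (a subspace containing    *)
(* the boundary space B); this is a bijection.                                *)

Section RibbonGraph.
Variables (R : realType) (D : finType) (s a : {perm D}).

Definition phi (x : D) : D := s (a x).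

Definition C1 := {ffun (D + D)%type -> R^o}.

Definition ch (k : D + D) : C1 := [ffun j => (j == k)%:R].

(* cellular boundary d1 : C_1 -> C_0 of Gamma.  0-cells are indexed by a    *)
(* dart in them (coordinates are repeated along orbits, which is harmless):  *)
(* inl (inl x) = vertex of x, inl (inr x) = edge-midpoint of x,              *)
(* inr x = face of x.  d g_d = e(d) - v(d), d h_d = e(d) - f(d).             *)
Definition bd1 (c : C1) : {ffun ((D + D) + D)%type -> R^o} :=
  [ffun k => match k with
             | inl (inl x) => - \sum_(d | fconnect s x d) c (inl d)
             | inl (inr x) => \sum_(d | fconnect a x d) (c (inl d) + c (inr d))
             | inr x => - \sum_(d | fconnect phi x d) c (inr d)
             end].

Definition Zcyc : {vspace C1} := lker (linfun bd1).

Definition bd2 (y : D) : C1 :=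
  ch (inl y) - ch (inr (a y)) + ch (inr (s y)) - ch (inl (s y)).

Definition Bnd : {vspace C1} := <<[seq bd2 y | y <- enum D]>>%VS.

(* spanning subgraphs of G (resp. Gdual ) = sets of edges, encoded as          *)
(* a-stable sets of darts (the same encoding serves for Gdual, since e <-> e_dual) *)
Definition edge_set (S : {set D}) : bool := [forall d in S, a d \in S].

Definition suppG (S : {set D}) : {vspace C1} :=
  <<[seq ch (inl d) | d <- enum S]>>%VS.
Definition suppD (S : {set D}) : {vspace C1} :=
  <<[seq ch (inr d) | d <- enum S]>>%VS.

(* H_1(H;R) for the spanning subgraph H of G with edge set S                 *)
(* (resp. of Gdual with dual edge set S), as cycles of Gamma supported on H    *)
Definition ZG (S : {set D}) : {vspace C1} := (Zcyc :&: suppG S)%VS.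
Definition ZD (S : {set D}) : {vspace C1} := (Zcyc :&: suppD S)%VS.

(* number of connected components of a spanning subgraph with edge set S,    *)
(* where vertices are the orbits of rot (rot = s for G, rot = phi for Gdual ): *)
(* darts are linked to their rot-successor and, along edges of S, to their   *)
(* a-partner.                                                                 *)
Definition ncomp (rot : D -> D) (S : {set D}) : nat :=
  n_comp (fun x y => (y == rot x) || ((x \in S) && (y == a x))) predT.

(* Intersection form: the intersection number of a cycle z of G with a cycle *)
(* b of Gdual (which meet transversally, only at edge midpoints, each edge     *)
(* crossing its dual edge once) is the signed count of crossings; up to the  *)
(* global factor 2 (and a global sign) this is                               *)
Definition pairing (z b : C1) : R^o := \sum_(d : D) z (inl d) * b (inr d).
(* Every class of H_1 has a representative in G and one in Gdual, so          *)
(* w([z],[b]) = pairing z b / 2 defines w on H_1(Sigma;R).                   *)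

(* V^perp, for a subspace V of H_1 given by its preimage U in Zcyc:          *)
(* the classes [b], b a cycle of Gdual, with w([z],[b]) = 0 for every cycle z  *)
(* of G representing an element of V.                                        *)
Definition perp (U : {vspace C1}) : {vspace C1} :=
  ((ZD setT :&: \bigcap_(z <- vbasis (U :&: ZG setT)) lker (linfun (pairing z)))
     + Bnd)%VS.

(* Formal polynomials.  A monomial [V] X^i Y^j is the generator (V, i, j) of *)
(* the free abelian group on ({vspace C1} * nat * nat); the polynomials       *)
(* P~ are Z-linear combinations of such monomials.                           *)
Definition mono := ({vspace C1} * nat * nat)%type.

Definition fgmapk (f : mono -> mono) (P : {freeg mono}) : {freeg mono} :=
  \sum_(k <- dom P) << coeff k P *g f k >>.

(* P~_{G,Sigma}(X,Y) = sum_H [i_* H_1(H)] X^(c(H)-c(G)) Y^(k(H)) *)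
Definition PG : {freeg mono} :=
  \sum_(S : {set D} | edge_set S)
     << ((ZG S + Bnd)%VS, (ncomp s S - ncomp s setT)%N, \dim (ZG S :&: Bnd)) >>.

Definition PGdual : {freeg mono} :=
  \sum_(S : {set D} | edge_set S)
     << ((ZD S + Bnd)%VS, (ncomp phi S - ncomp phi setT)%N, \dim (ZD S :&: Bnd)) >>.

End RibbonGraph.

Definition comb_map (D : finType) (s a : {perm D}) : Prop :=
  [/\ #|D| != 0%N,
      (forall d, a (a d) = d /\ a d != d) &
      (forall x y, connect (fun u v => (v == s u) || (v == a u)) x y)].

(* Main.v *)
Require Import Defs.
From HB Require Import structures.
From mathcomp Require Import all_boot all_order all_fingroup all_algebra.
From mathcomp Require Import reals.
From mathcomp.multinomials Require Import freeg.
From mathcomp Require Import ring lra.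
Set Implicit Arguments. Unset Strict Implicit. Unset Printing Implicit Defensive.
Import GRing.Theory.
Local Open Scope ring_scope.

Section GenA.
Variables (K : fieldType) (D : finType).

Lemma orbit_sum (f : D -> D) (injf : injective f) (nu b : D -> K) :
  (forall x, nu (f x) = nu x) ->
  (forall x, \sum_(d | fconnect f x d) b d = 0) ->
  \sum_d nu d * b d = 0.
Proof.
move=> nuf bs.
have symf : connect_sym (frel f) by move=> x y; apply: fconnect_sym.
have nuc : forall x y, fconnect f x y -> nu x = nu y.
  apply: fconnect_invariant => x /=; exact/eqP/nuf.
rewrite (partition_big (froot f) xpredT) //=.
apply: big1 => r _.
case: (pickP (fun d => froot f d == r)) => [d0 /eqP Hd0|H0]; last first.
  by rewrite big_pred0.
rewrite (eq_bigl (fun d => fconnect f d0 d)); last first.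
  by move=> d; rewrite -Hd0 (root_connect symf) symf.
rewrite (eq_bigr (fun d => nu d0 * b d)); last by move=> d /nuc ->.
by rewrite -mulr_sumr bs mulr0.
Qed.

Lemma conn_sym_of (e : rel D) :
  (forall x y, e x y -> connect e y x) -> connect_sym e.
Proof.
move=> H.
have H1 : forall x y, connect e x y -> connect e y x.
  move=> x _ /connectP[p e_p ->]; elim: p x e_p => /= [x _|z p IHp x /andP[exz pz]].
    exact: connect0.
  exact: connect_trans (IHp _ pz) (H _ _ exz).
by move=> x y; apply/idP/idP; apply: H1.
Qed.

Definition Fn := {ffun D -> K^o}.

Definition chi (e : rel D) (r : D) : Fn := [ffun x => (fingraph.root e x == r)%:R].

Lemma dim_inv (e : rel D) (W : {vspace Fn}) : connect_sym e ->
  (forall l : Fn, (l \in W) = [forall x, forall y, e x y ==> (l y == l x)]) ->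
  \dim W = n_comp e predT.
Proof.
move=> syme HW.
have Hc : forall l : Fn, l \in W -> forall x y, connect e x y -> l x = l y.
  move=> l lW x y cxy.
  have cl : closed e [pred z | l z == l x].
    apply: intro_closed => //= u v euv; rewrite !inE => /eqP <-.
    by move: lW; rewrite HW => /forallP/(_ u)/forallP/(_ v)/implyP/(_ euv).
  have := closed_connect cl cxy; rewrite !inE eqxx => /esym/eqP.
  by move=> ->.
set X := [seq chi e r | r <- enum (fingraph.roots e)].
have XW : <<X>>%VS = W.
  apply/eqP; rewrite eqEsubv; apply/andP; split.
    apply/span_subvP => _ /mapP[r _ ->]; rewrite HW.
    apply/forallP => x; apply/forallP => y; apply/implyP => exy.
    rewrite !ffunE; have /(fingraph.rootP syme) -> // : connect e x y by apply: connect1.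
  apply/subvP => l lW.
  have -> : l = \sum_(r <- enum (fingraph.roots e)) l r *: chi e r.
    apply/ffunP => x; rewrite sum_ffunE.
    rewrite (bigD1_seq (fingraph.root e x)) /=; last 2 first.
    - by rewrite mem_enum; apply: roots_root.
    - exact: enum_uniq.
    rewrite big1_seq ?addr0.
      rewrite !ffunE eqxx [_ *: _]mulr1; apply: (Hc l lW); exact: (fingraph.connect_root e x).
    by move=> r /andP[/negbTE nr _]; rewrite !ffunE eq_sym nr [_ *: _]mulr0.
  rewrite big_seq; apply: memv_suml => r rr; apply: memvZ; apply: memv_span; exact: map_f.
have fX : free X.
  rewrite -[X]in_tupleE; apply/freeP => k Hk i.
  have [r0 _] : exists r0 : D, true.
    by have := ltn_ord i; rewrite [X in (_ < X)%N]size_map; case: (enum _) => // r0 _ _; exists r0.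
  set r := nth r0 (enum (fingraph.roots e)) i.
  have ir : (i < size (enum (fingraph.roots e)))%N by rewrite -(size_map (chi e)); exact: ltn_ord.
  have rr : fingraph.roots e r.
    by have := mem_nth r0 ir; rewrite mem_enum.
  have := congr1 (fun f : Fn => f r) Hk.
  have ch : forall j : 'I_(size X), (in_tuple X)`_j r = (j == i)%:R.
    move=> j; have jr : (j < size (enum (fingraph.roots e)))%N.
      by have := ltn_ord j; rewrite [X in (_ < X)%N]size_map.
    rewrite /= (nth_map r0 0) // ffunE (eqP rr).
    by rewrite nth_uniq ?enum_uniq // eq_sym.
  rewrite /= sum_ffunE ffunE (bigD1 i) //= big1 ?addr0.
    by rewrite ffunE ch eqxx [_ *: _]mulr1.
  by move=> j nji; rewrite ffunE ch (negbTE nji) [_ *: _]mulr0.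
rewrite -XW (eqnP fX) size_map -cardE /n_comp_mem.
by apply: eq_card => x; rewrite !inE andbT.
Qed.

End GenA.

Section Annih.
Variables (K : fieldType).

Lemma sum_ord_enum (D : finType) (F : 'I_#|D| -> K) :
  \sum_j F j = \sum_d F (enum_rank d).
Proof.
rewrite (reindex (@enum_rank D)) //; exists enum_val => x _.
  exact: enum_rankK. exact: enum_valK.
Qed.

Lemma annih (D I : finType) (q : I -> D -> K) (w : D -> K) :
  (forall z : D -> K, (forall i, \sum_d q i d * z d = 0) -> \sum_d w d * z d = 0) ->
  exists c : I -> K, forall d, w d = \sum_i c i * q i d.
Proof.
move=> H.
pose Q : 'M[K]_(#|D|, #|I|) := \matrix_(j, i) q (enum_val i) (enum_val j).
pose K0 := kermx Q.
pose wv : 'rV[K]_#|D| := \row_j w (enum_val j).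
have s1 : wv *m K0^T = 0.
  apply/rowP => r; rewrite !mxE.
  have := H (fun d => K0 r (enum_rank d)).
  have Hc : forall i, \sum_d q i d * K0 r (enum_rank d) = 0.
    move=> i; have := congr1 (fun M : 'M[K]_(#|D|, #|I|) => M r (enum_rank i)) (mulmx_ker Q).
    rewrite /= !mxE sum_ord_enum => E; rewrite -[RHS]E; apply: eq_bigr => d _.
    by rewrite !mxE !enum_rankK mulrC.
  move=> /(_ Hc) E; rewrite -[RHS]E sum_ord_enum; apply: eq_bigr => d _.
  by rewrite !mxE enum_rankK.
have s2 : Q^T *m K0^T = 0 by rewrite -trmx_mul mulmx_ker trmx0.
have sub1 : (Q^T <= kermx K0^T)%MS by apply/sub_kermxP.
have rk : \rank (kermx K0^T) = \rank Q^T.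
  rewrite mxrank_ker mxrank_tr /K0 mxrank_ker mxrank_tr subKn //.
  exact: rank_leq_row.
have E : (Q^T == kermx K0^T)%MS by rewrite -(mxrank_leqif_eq sub1).2 rk.
have wsub : (wv <= Q^T)%MS.
  apply: submx_trans (proj2 (andP E)); exact/sub_kermxP.
case/submxP: wsub => c0 Hc0.
exists (fun x => c0 0 (enum_rank x)) => d.
have := congr1 (fun M : 'rV[K]_#|D| => M 0 (enum_rank d)) Hc0; rewrite /= !mxE enum_rankK => ->.
rewrite sum_ord_enum; apply: eq_bigr => x _; by rewrite !mxE !enum_rankK.
Qed.
End Annih.

Section B.
Variables (R : realType) (D : finType) (s a : {perm D}).
Hypothesis aK : involutive a.
Hypothesis afix : forall d, a d != d.
Local Notation C := (C1 R D).
Local Notation bd1 := (@bd1 R D s a).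

Lemma bd1_lin : linear bd1.
Proof.
move=> k u v; apply/ffunP => [[[x|x]|x]]; rewrite !ffunE.
- under eq_bigr do rewrite !ffunE.
  by rewrite big_split /= -scaler_sumr scalerN opprD.
- under eq_bigr do rewrite !ffunE.
  rewrite (eq_bigr (fun d => k *: (u (inl d) + u (inr d)) + (v (inl d) + v (inr d)))).
    by rewrite big_split /= -scaler_sumr.
  by move=> d _; rewrite scalerDr addrACA.
- under eq_bigr do rewrite !ffunE.
  by rewrite big_split /= -scaler_sumr scalerN opprD.
Qed.

HB.instance Definition _ := GRing.isLinear.Build R C _ _ bd1 bd1_lin.
Local Notation Zcyc := (@Zcyc R D s a).
Local Notation Bnd := (@Bnd R D s a).
Local Notation Fn := (Fn R D).

Lemma ZcycP c : (c \in Zcyc) = (bd1 c == 0).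
Proof. by rewrite memv_ker lfunE. Qed.

Definition Tl (l : Fn) : C := [ffun k => match k with
  | inl d => l d - l ((s^-1)%g d) | inr d => l ((s^-1)%g d) - l (a d) end].

Lemma Tl_lin : linear Tl.
Proof.
move=> k u v; apply/ffunP => [[x|x]]; rewrite !ffunE.
  by rewrite scalerBr addrACA opprD.
by rewrite scalerBr addrACA opprD.
Qed.
HB.instance Definition _ := GRing.isLinear.Build R Fn C _ Tl Tl_lin.

Definition delta (y : D) : Fn := [ffun x => (x == y)%:R].

Lemma Tl_delta y : Tl (delta y) = @bd2 R D s a y.
Proof.
have eI : forall x z : D, (inl x == inl z :> D + D) = (x == z) by [].
have eR : forall x z : D, (inr x == inr z :> D + D) = (x == z) by [].
apply/ffunP => [[d|d]]; rewrite !ffunE /= ?eI ?eR.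
  by rewrite (can2_eq (permKV s) (permK s)) subr0 addr0.
by rewrite (can2_eq (permKV s) (permK s)) (can2_eq aK aK) sub0r subr0 addrC.
Qed.


Lemma delta_sum (l : Fn) : l = \sum_y l y *: delta y.
Proof.
apply/ffunP => x; rewrite sum_ffunE (bigD1 x) //= big1 ?addr0.
  by rewrite !ffunE eqxx [_ *: _]mulr1.
by move=> y nyx; rewrite !ffunE eq_sym (negbTE nyx) [_ *: _]mulr0.
Qed.

Lemma Bnd_img : Bnd = limg (linfun Tl).
Proof.
apply/eqP; rewrite eqEsubv; apply/andP; split.
  apply/span_subvP => _ /mapP[y _ ->]; rewrite -Tl_delta -(lfunE Tl).
  by apply: memv_img; exact: memvf.
apply/subvP => _ /memv_imgP[l _ ->]; rewrite lfunE (delta_sum l) linear_sum.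
apply: memv_suml => y _; rewrite linearZ /= Tl_delta; apply: memvZ.
by apply: memv_span; apply: map_f; exact: mem_enum.
Qed.

Lemma BndP v : reflect (exists l, v = Tl l) (v \in Bnd).
Proof.
rewrite Bnd_img; apply: (iffP memv_imgP) => [[l _ ->]|[l ->]].
  by exists l; rewrite lfunE.
by exists l; rewrite ?memvf ?lfunE.
Qed.

Lemma injphi : injective (phi s a).
Proof. by move=> x y /perm_inj/perm_inj. Qed.

Lemma bd1_Tl l : bd1 (Tl l) = 0.
Proof.
apply/ffunP => [[[x|x]|x]]; rewrite !ffunE.
- under eq_bigr do rewrite !ffunE.
  rewrite sumrB [X in _ - X](reindex_inj (@perm_inj _ s)) /=.
  rewrite [X in _ - X](eq_bigl (fun d => fconnect s x d)); last by move=> d; rewrite -(same_fconnect1_r (@perm_inj _ _)).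
  by under [X in _ - X]eq_bigr do rewrite permK; rewrite subrr oppr0.
- under eq_bigr do rewrite !ffunE addrA subrK.
  rewrite sumrB [X in _ - X](reindex_inj (@perm_inj _ a)) /=.
  rewrite [X in _ - X](eq_bigl (fun d => fconnect a x d)); last by move=> d; rewrite -(same_fconnect1_r (@perm_inj _ _)).
  by under [X in _ - X]eq_bigr do rewrite aK; rewrite subrr.
- under eq_bigr do rewrite !ffunE.
  rewrite sumrB [X in X - _](reindex_inj injphi) /=.
  rewrite [X in X - _](eq_bigl (fun d => fconnect (phi s a) x d)); last first.
    by move=> d; rewrite -(same_fconnect1_r injphi).
  by under [X in X - _]eq_bigr do rewrite /phi permK; rewrite subrr oppr0.
Qed.


Lemma scaleRE (k x : R) : k *: (x : R^o) = k * x.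
Proof. by []. Qed.

Lemma span_vanish (X : seq C) k :
  (forall x, x \in X -> x k = 0) -> forall c, c \in <<X>>%VS -> c k = 0.
Proof.
move=> H c; rewrite -[X]in_tupleE => /coord_span ->; rewrite sum_ffunE big1 // => i _.
by rewrite ffunE H ?scaleRE ?mulr0 //; apply: mem_nth; exact: ltn_ord.
Qed.

Lemma sum_eq1 (P : pred D) (F : D -> R) x :
  \sum_(d | P d) F d * (x == d)%:R = if P x then F x else 0.
Proof.
rewrite big_mkcond (bigD1 x) //= eqxx mulr1 big1 ?addr0 // => d ndx.
by rewrite eq_sym (negbTE ndx) mulr0; case: (P d).
Qed.

Lemma suppG_E (S : {set D}) (c : C) : c \in suppG R S ->
  (forall d, c (inr d) = 0) /\ (forall d, d \notin S -> c (inl d) = 0).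
Proof.
move=> cS; split=> [d|d dS]; apply: (span_vanish _ cS) => _ /mapP[e eS ->]; rewrite ffunE //.
by rewrite mem_enum in eS; case: eqP => // [[ed]]; rewrite ed eS in dS.
Qed.

Lemma suppD_E (S : {set D}) (c : C) : c \in suppD R S ->
  (forall d, c (inl d) = 0) /\ (forall d, d \notin S -> c (inr d) = 0).
Proof.
move=> cS; split=> [d|d dS]; apply: (span_vanish _ cS) => _ /mapP[e eS ->]; rewrite ffunE //.
by rewrite mem_enum in eS; case: eqP => // [[ed]]; rewrite ed eS in dS.
Qed.

Lemma suppG_I (S : {set D}) (c : C) :
  (forall d, c (inr d) = 0) -> (forall d, d \notin S -> c (inl d) = 0) ->
  c \in suppG R S.
Proof.
move=> H1 H2.
have -> : c = \sum_(d | d \in S) c (inl d) *: ch R (inl d).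
  apply/ffunP => [[x|x]]; rewrite sum_ffunE; under eq_bigr do rewrite !ffunE scaleRE.
    rewrite (eq_bigr (fun d => c (inl d) * (x == d)%:R)) ?sum_eq1 //.
    by case: ifP => // /negbT /H2.
  by rewrite big1 ?H1 // => d _; rewrite mulr0.
apply: memv_suml => d dS; apply: memvZ; apply: memv_span; apply: map_f.
by rewrite mem_enum.
Qed.

Lemma suppD_I (S : {set D}) (c : C) :
  (forall d, c (inl d) = 0) -> (forall d, d \notin S -> c (inr d) = 0) ->
  c \in suppD R S.
Proof.
move=> H1 H2.
have -> : c = \sum_(d | d \in S) c (inr d) *: ch R (inr d).
  apply/ffunP => [[x|x]]; rewrite sum_ffunE; under eq_bigr do rewrite !ffunE scaleRE.
    by rewrite big1 ?H1 // => d _; rewrite mulr0.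
  rewrite (eq_bigr (fun d => c (inr d) * (x == d)%:R)) ?sum_eq1 //.
  by case: ifP => // /negbT /H2.
apply: memv_suml => d dS; apply: memvZ; apply: memv_span; apply: map_f.
by rewrite mem_enum.
Qed.


Definition erel (rot : D -> D) (S : {set D}) : rel D :=
  fun x y => (y == rot x) || ((x \in S) && (y == a x)).

Definition Minv (rot : D -> D) (S : {set D}) (l : Fn) : C :=
  [ffun k => match k with inl x => l (rot x) - l x
                        | inr x => if x \in S then l (a x) - l x else 0 end].

Lemma Minv_lin rot S : linear (Minv rot S).
Proof.
move=> k u v; apply/ffunP => [[x|x]]; rewrite !ffunE.
  by rewrite scalerBr addrACA opprD.
by case: (x \in S); [rewrite scalerBr addrACA opprD | rewrite scaler0 addr0].
Qed.
HB.instance Definition _ rot S := GRing.isLinear.Build R Fn C _ (Minv rot S) (Minv_lin rot S).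

Definition Ls rot S : {vspace Fn} := lker (linfun (Minv rot S)).

Lemma LsP (rot : D -> D) (S : {set D}) (l : Fn) :
  reflect (forall x, l (rot x) = l x /\ (x \in S -> l (a x) = l x)) (l \in Ls rot S).
Proof.
rewrite memv_ker lfunE; apply: (iffP eqP) => [H x|H].
  split; first by apply/eqP; rewrite -subr_eq0; have := congr1 (fun f : C => f (inl x)) H; rewrite /= !ffunE => ->.
  move=> xS; apply/eqP; rewrite -subr_eq0.
  by have := congr1 (fun f : C => f (inr x)) H; rewrite /= !ffunE xS => ->.
apply/ffunP => [[x|x]]; rewrite !ffunE.
  by rewrite (proj1 (H x)) subrr.
by case: ifP => // xS; rewrite (proj2 (H x) xS) subrr.
Qed.

Lemma Ls_mem (rot : D -> D) (S : {set D}) (l : Fn) :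
  (l \in Ls rot S) = [forall x, forall y, erel rot S x y ==> (l y == l x)].
Proof.
apply/LsP/idP => [H|/forallP H x].
  apply/forallP => x; apply/forallP => y; apply/implyP => /orP[/eqP->|/andP[xS /eqP->]].
    by rewrite (proj1 (H x)).
  by rewrite (proj2 (H x) xS).
split.
  by apply/eqP; have /forallP/(_ (rot x))/implyP := H x; apply; rewrite /erel eqxx.
move=> xS; apply/eqP; have /forallP/(_ (a x))/implyP := H x; apply.
by rewrite /erel xS eqxx orbT.
Qed.

Lemma erel_sym (rot : D -> D) (S : {set D}) : injective rot -> edge_set a S -> connect_sym (erel rot S).
Proof.
move=> injr eS; apply: conn_sym_of => x y /orP[/eqP->|/andP[xS /eqP->]].
  have : fconnect rot (rot x) x by rewrite (fconnect_sym injr); apply: fconnect1.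
  apply: connect_sub => u v /eqP <-; apply: connect1; by rewrite /erel eqxx.
apply: connect1; rewrite /erel aK eqxx andbT orbC.
by move/forallP: eS => /(_ x) /implyP /(_ xS) ->.
Qed.


Lemma dim_Ls (rot : D -> D) (S : {set D}) :
  injective rot -> edge_set a S -> \dim (Ls rot S) = ncomp a rot S.
Proof.
move=> injr eS; rewrite /ncomp; apply: dim_inv; first exact: erel_sym.
by move=> l; rewrite Ls_mem.
Qed.

Lemma edge_setC (S : {set D}) : edge_set a S -> edge_set a (~: S).
Proof.
move=> /forallP eS; apply/forallP => d; apply/implyP; rewrite !inE; apply: contra => adS.
by have /implyP /(_ adS) := eS (a d); rewrite aK.
Qed.

Lemma edge_setT : edge_set a setT.
Proof. by apply/forallP => d; rewrite !inE. Qed.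

Lemma ker_Tl : lker (linfun Tl) = Ls s setT.
Proof.
apply/vspaceP => l; rewrite memv_ker lfunE; apply/eqP/LsP => [H x|H].
  have h1 : forall y, l y = l ((s^-1)%g y).
    move=> y; have := congr1 (fun f : C => f (inl y)) H.
    by rewrite /= !ffunE => /eqP; rewrite subr_eq0 => /eqP.
  have h2 := congr1 (fun f : C => f (inr x)) H.
  rewrite /= !ffunE in h2.
  split; first by rewrite h1 permK.
  move=> _; move/eqP: h2; rewrite subr_eq0 => /eqP <-.
  by rewrite -h1.
apply/ffunP => [[x|x]]; rewrite !ffunE.
  by rewrite -{1}(permKV s x) (proj1 (H _)) subrr.
rewrite (proj2 (H x)) ?inE //.
by rewrite -{2}(permKV s x) (proj1 (H _)) subrr.
Qed.

Lemma dim_img_Ls (T : 'Hom(Fn, C)) (rot : D -> D) (S : {set D}) :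
  lker T = Ls rot setT -> (Ls rot setT <= Ls rot S)%VS ->
  \dim (T @: Ls rot S) = (\dim (Ls rot S) - \dim (Ls rot setT))%N.
Proof.
move=> kT sub; have := limg_ker_dim T (Ls rot S).
by rewrite kT (capv_idPr sub) => <-; rewrite addKn.
Qed.

Lemma Ls_subT (rot : D -> D) (S : {set D}) : (Ls rot setT <= Ls rot S)%VS.
Proof.
apply/subvP => l /LsP H; apply/LsP => x; split; first exact: (proj1 (H x)).
by move=> _; apply: (proj2 (H x)); rewrite inE.
Qed.


Lemma ZD_Bnd_img (S : {set D}) :
  (@ZD R D s a (~: S) :&: Bnd)%VS = (linfun Tl @: Ls s S)%VS.
Proof.
apply/vspaceP => v; apply/idP/idP.
  rewrite memv_cap /ZD memv_cap => /andP[/andP[_ /suppD_E [H1 H2]] /BndP [l vl]].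
  subst v; apply/memv_imgP; exists l; last by rewrite lfunE.
  have hx : forall y, l y = l ((s^-1)%g y).
    by move=> y; have := H1 y; rewrite ffunE => /eqP; rewrite subr_eq0 => /eqP.
  apply/LsP => x; split; first by rewrite hx permK.
  move=> xS; have := H2 x; rewrite inE xS => /(_ isT).
  by rewrite ffunE => /eqP; rewrite subr_eq0 => /eqP <-; rewrite -hx.
case/memv_imgP => l /LsP H ->; rewrite lfunE /ZD !memv_cap; apply/andP; split.
  apply/andP; split; first by rewrite ZcycP bd1_Tl.
  apply: suppD_I => d; rewrite ffunE.
    by rewrite -{1}(permKV s d) (proj1 (H _)) subrr.
  rewrite inE negbK => dS; rewrite (proj2 (H d) dS).
  by rewrite -{2}(permKV s d) (proj1 (H _)) subrr.
by apply/BndP; exists l.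
Qed.

Lemma dim_ZD (S : {set D}) : edge_set a S ->
  \dim (@ZD R D s a (~: S) :&: Bnd) = (ncomp a s S - ncomp a s setT)%N.
Proof.
move=> eS; rewrite ZD_Bnd_img dim_img_Ls ?ker_Tl ?Ls_subT //.
by rewrite !dim_Ls //; [exact: perm_inj | exact: edge_setT | exact: perm_inj].
Qed.

Definition Tg (m : Fn) : C := [ffun k => match k with
  | inl d => m (a d) - m (a ((s^-1)%g d)) | inr d => m (a ((s^-1)%g d)) - m d end].

Lemma Tg_lin : linear Tg.
Proof.
move=> k u v; apply/ffunP => [[x|x]]; rewrite !ffunE.
  by rewrite scalerBr addrACA opprD.
by rewrite scalerBr addrACA opprD.
Qed.
HB.instance Definition _ := GRing.isLinear.Build R Fn C _ Tg Tg_lin.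

Lemma Tg_Tl m : Tg m = Tl [ffun x => m (a x)].
Proof. by apply/ffunP => [[x|x]]; rewrite !ffunE ?aK. Qed.

Lemma phi_a_sV d : phi s a (a ((s^-1)%g d)) = d.
Proof. by rewrite /phi aK permKV. Qed.

Lemma ker_Tg : lker (linfun Tg) = Ls (phi s a) setT.
Proof.
apply/vspaceP => m; rewrite memv_ker lfunE; apply/eqP/LsP => [H x|H].
  have hy : forall d, m (a ((s^-1)%g d)) = m d.
    move=> d; have := congr1 (fun f : C => f (inr d)) H.
    by rewrite /= !ffunE => /eqP; rewrite subr_eq0 => /eqP.
  have hx : forall d, m (a d) = m (a ((s^-1)%g d)).
    move=> d; have := congr1 (fun f : C => f (inl d)) H.
    by rewrite /= !ffunE => /eqP; rewrite subr_eq0 => /eqP.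
  split; first by rewrite -hy /phi permK aK.
  by move=> _; rewrite hx hy.
have ha : forall x, m (a x) = m x by move=> x; apply: (proj2 (H x)); rewrite inE.
have hy : forall d, m (a ((s^-1)%g d)) = m d.
  by move=> d; rewrite -{2}(phi_a_sV d) (proj1 (H _)).
apply/ffunP => [[x|x]]; rewrite !ffunE hy ?ha subrr //.
Qed.

Lemma ZG_Bnd_img (S : {set D}) :
  (@ZG R D s a S :&: Bnd)%VS = (linfun Tg @: Ls (phi s a) (~: S))%VS.
Proof.
apply/vspaceP => v; apply/idP/idP.
  rewrite memv_cap /ZG memv_cap => /andP[/andP[_ /suppG_E [H1 H2]] /BndP [l vl]].
  subst v; apply/memv_imgP; exists [ffun x => l (a x)]; last first.
    transitivity (Tg [ffun x => l (a x)]); last by rewrite lfunE.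
    by rewrite Tg_Tl; congr Tl; apply/ffunP => x; rewrite !ffunE aK.
  have hy : forall d, l ((s^-1)%g d) = l (a d).
    by move=> d; have := H1 d; rewrite ffunE => /eqP; rewrite subr_eq0 => /eqP.
  apply/LsP => x; rewrite !ffunE; split.
    by have := hy (s (a x)); rewrite permK /phi => ->.
  rewrite inE aK => xS; have := H2 x xS; rewrite ffunE => /eqP; rewrite subr_eq0 => /eqP ->.
  by rewrite hy.
case/memv_imgP => m /LsP H ->.
have -> : linfun Tg m = Tg m by rewrite lfunE.
rewrite /ZG !memv_cap; apply/andP; split.
  apply/andP; split; first by rewrite ZcycP Tg_Tl bd1_Tl.
  have hy : forall d, m (a ((s^-1)%g d)) = m d.
    by move=> d; rewrite -{2}(phi_a_sV d) (proj1 (H _)).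
  apply: suppG_I => d; rewrite ffunE hy ?subrr //.
  by move=> dS; rewrite (proj2 (H d)) ?subrr // inE.
by apply/BndP; exists [ffun x => m (a x)]; exact: Tg_Tl.
Qed.

Lemma dim_ZG (S : {set D}) : edge_set a S ->
  \dim (@ZG R D s a S :&: Bnd) =
  (ncomp a (phi s a) (~: S) - ncomp a (phi s a) setT)%N.
Proof.
move=> eS; rewrite ZG_Bnd_img dim_img_Ls ?ker_Tg ?Ls_subT //.
rewrite !dim_Ls //; [exact: injphi | exact: edge_setT | exact: injphi | exact: edge_setC].
Qed.


Local Notation pairing := (@pairing R D).

Lemma pairing_lin z : linear (pairing z).
Proof.
move=> k u v; rewrite /pairing scaler_sumr -big_split /=; apply: eq_bigr => d _.
by rewrite !ffunE scaleRE !scaleRE; ring.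
Qed.
HB.instance Definition _ z := GRing.isLinear.Build R C R^o _ (pairing z) (pairing_lin z).

Lemma pairingDl z1 z2 b : pairing (z1 + z2) b = pairing z1 b + pairing z2 b.
Proof. by rewrite /pairing -big_split; apply: eq_bigr => d _; rewrite ffunE mulrDl. Qed.

Lemma pairingZl k z b : pairing (k *: z) b = k * pairing z b.
Proof. by rewrite /pairing mulr_sumr; apply: eq_bigr => d _; rewrite ffunE scaleRE mulrA. Qed.

Lemma pairing_suml (I : finType) (F : I -> C) b :
  pairing (\sum_i F i) b = \sum_i pairing (F i) b.
Proof.
rewrite /pairing exchange_big /=; apply: eq_bigr => d _.
by rewrite sum_ffunE mulr_suml.
Qed.

Lemma bigcap_P (X : seq C) b :
  (b \in (\bigcap_(z <- X) lker (linfun (pairing z)))%VS) = all (fun z => pairing z b == 0) X.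
Proof.
elim: X => [|z X IH]; first by rewrite big_nil memvf.
by rewrite big_cons memv_cap IH memv_ker lfunE.
Qed.

Lemma pairing_span (U : {vspace C}) b :
  (forall z, z \in vbasis U -> pairing z b = 0) -> forall z, z \in U -> pairing z b = 0.
Proof.
move=> H z /coord_vbasis ->; rewrite pairing_suml big1 // => i _.
by rewrite pairingZl H ?mulr0 //; apply: mem_nth; rewrite size_tuple.
Qed.

Lemma face_lemma z b : z \in Bnd -> (forall d, z (inr d) = 0) ->
  b \in Zcyc -> (forall d, b (inl d) = 0) -> pairing z b = 0.
Proof.
move=> /BndP [l ->] zy; rewrite ZcycP => /eqP bZ bx.
have hy : forall d, l ((s^-1)%g d) = l (a d).
  by move=> d; have := zy d; rewrite ffunE => /eqP; rewrite subr_eq0 => /eqP.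
have fs : forall x, \sum_(d | fconnect (phi s a) x d) b (inr d) = 0.
  move=> x; have := congr1 (fun f : {ffun _ -> R^o} => f (inr x)) bZ.
  by rewrite /= !ffunE => /eqP; rewrite oppr_eq0 => /eqP.
have ms : forall x, \sum_(d | fconnect a x d) b (inr d) = 0.
  move=> x; have := congr1 (fun f : {ffun _ -> R^o} => f (inl (inr x))) bZ.
  rewrite /= !ffunE => E; rewrite -[RHS]E; apply: eq_bigr => d _; by rewrite bx add0r.
have e1 : \sum_d (l d + l (a d)) * b (inr d) = 0.
  apply: (orbit_sum (@perm_inj _ a)) => [x|x]; [by rewrite aK addrC | exact: ms].
have e2 : \sum_d l (a d) * b (inr d) = 0.
  apply: (orbit_sum injphi) => [x|x]; [by rewrite -hy /phi permK | exact: fs].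
rewrite /pairing (eq_bigr (fun d => (l d + l (a d)) * b (inr d) - 2 * (l (a d) * b (inr d)))).
  by rewrite sumrB -mulr_sumr e1 e2 mulr0 subrr.
by move=> d _; rewrite !ffunE hy; ring.
Qed.


Lemma fconnect_a d e : fconnect a d e = (e == d) || (e == a d).
Proof.
apply/idP/idP => [H|/orP[/eqP->|/eqP->]]; [|exact: connect0|exact: fconnect1].
pose pr := [pred x | (x == d) || (x == a d)].
have cl : closed (frel a) pr.
  move=> x y /eqP <-; rewrite !inE.
  by rewrite (can2_eq aK aK) (inj_eq (@perm_inj _ a)) orbC.
by have := closed_connect cl H; rewrite !inE eqxx /= => <-.
Qed.

Lemma sum_indic (P : pred D) (F : D -> R) :
  \sum_(d | P d) F d = \sum_d (P d)%:R * F d.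
Proof.
rewrite big_mkcond; apply: eq_bigr => d _; case: (P d); by rewrite ?mul1r ?mul0r.
Qed.

Lemma cut_lemma (S : {set D}) b : edge_set a S -> b \in @ZD R D s a setT ->
  (forall z, z \in @ZG R D s a S -> pairing z b = 0) ->
  exists phi0 : Fn, b - Tl phi0 \in @ZD R D s a (~: S).
Proof.
move=> eS; rewrite /ZD memv_cap => /andP[bZ /suppD_E [bx _]] Hp.
have bZ' := bZ; rewrite ZcycP in bZ'; move/eqP in bZ'.
pose B d := b (inr d).
have anti : forall d, B d + B (a d) = 0.
  move=> d; have := congr1 (fun f : {ffun _ -> R^o} => f (inl (inr d))) bZ'.
  rewrite /= !ffunE (bigD1 d) ?connect0 //= (bigD1 (a d)) /=; last first.
    by rewrite fconnect1 afix.
  rewrite big1 ?addr0 ?bx ?add0r ?addrA //.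
  by move=> e /andP[/andP[]]; rewrite fconnect_a => /orP[] /eqP-> ; rewrite eqxx.
pose q (i : D + (D + D)) (d : D) : R := match i with
  | inl j => ((j \notin S) && (d == j))%:R
  | inr (inl j) => (fconnect a j d)%:R
  | inr (inr j) => (fconnect s j d)%:R end.
have [c Hc] : exists c : D + (D + D) -> R, forall d, B d = \sum_i c i * q i d.
  apply: annih => z Hz.
  pose zc : C := [ffun k => match k with inl d => z d | inr _ => 0 end].
  have zcG : zc \in @ZG R D s a S.
    rewrite /ZG memv_cap; apply/andP; split.
      rewrite ZcycP; apply/eqP/ffunP => [[[x|x]|x]]; rewrite !ffunE.
      - apply/eqP; rewrite oppr_eq0; apply/eqP.
        rewrite sum_indic -[RHS](Hz (inr (inr x))).
        by apply: eq_bigr => d _; rewrite ffunE mulrC.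
      - rewrite sum_indic -[RHS](Hz (inr (inl x))).
        by apply: eq_bigr => d _; rewrite !ffunE addr0 mulrC.
      - by rewrite big1 ?oppr0 // => d _; rewrite ffunE.
    apply: suppG_I => d; rewrite ffunE // => dS.
    have := Hz (inl d); rewrite (bigD1 d) //= big1 ?addr0.
      by rewrite dS eqxx mul1r.
    by move=> e ned; rewrite (negbTE ned) andbF mul0r.
  have := Hp zc zcG; rewrite /pairing => E; rewrite -[RHS]E; apply: eq_bigr => d _.
  by rewrite !ffunE mulrC.
pose X d := \sum_j c (inl j) * ((j \notin S) && (d == j))%:R.
pose M d := \sum_j c (inr (inl j)) * (fconnect a j d)%:R.
pose P d := \sum_j c (inr (inr j)) * (fconnect s j d)%:R.
have Hd : forall d, B d = X d + (M d + P d).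
  by move=> d; rewrite Hc big_sumType big_sumType.
have HX : forall d, d \in S -> X d = 0.
  move=> d dS; apply: big1 => j _; case: (eqVneq d j) => [<-|nd]; by rewrite ?dS ?(negbTE nd) ?andbF /= ?mulr0.
have Ma : forall d, M (a d) = M d.
  by move=> d; apply: eq_bigr => j _; rewrite -(same_fconnect1_r (@perm_inj _ a)).
have Ps : forall d, P (s d) = P d.
  by move=> d; apply: eq_bigr => j _; rewrite -(same_fconnect1_r (@perm_inj _ s)).
have PsV : forall d, P ((s^-1)%g d) = P d by move=> d; rewrite -{2}(permKV s d) Ps.
exists [ffun x => P x / 2].
rewrite /ZD memv_cap; apply/andP; split.
  by rewrite memvB // ZcycP bd1_Tl.
apply: suppD_I => d; rewrite !ffunE.
  by rewrite bx PsV subrr subr0.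
rewrite inE negbK => dS.
have adS : a d \in S by move/forallP: eS => /(_ d) /implyP /(_ dS).
have h1 := Hd d; have h2 := Hd (a d); have h3 := anti d.
rewrite HX // in h1; rewrite HX // Ma in h2.
rewrite PsV; rewrite -/(B d); lra.
Qed.


Lemma ZG_sub (S : {set D}) : (@ZG R D s a S <= @ZG R D s a setT)%VS.
Proof.
apply/subvP => z; rewrite /ZG !memv_cap => /andP[-> /suppG_E [h1 _]] /=.
by apply: suppG_I => // d; rewrite inE.
Qed.

Lemma perp_eq (S : {set D}) : edge_set a S ->
  @perp R D s a (@ZG R D s a S + Bnd)%VS = (@ZD R D s a (~: S) + Bnd)%VS.
Proof.
move=> eS; apply/vspaceP => v; apply/idP/idP.
  case/memv_addP => b bP [t tB ->]; move: bP; rewrite memv_cap bigcap_P => /andP[bZD /allP Hb].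
  have Hz := pairing_span (fun z zb => eqP (Hb z zb)).
  have [ph Hph] : exists phi0 : Fn, b - Tl phi0 \in @ZD R D s a (~: S).
    apply: cut_lemma => // z zG; apply: Hz; rewrite memv_cap.
    by rewrite (subvP (addvSl _ _) z zG) (subvP (ZG_sub S) z zG).
  rewrite -(subrK (Tl ph) b) -addrA; apply: memv_add => //; apply: memvD => //.
  by apply/BndP; exists ph.
case/memv_addP => b bZ [t tB ->]; apply: memv_add => //.
have [bZc bS] : b \in Zcyc /\ b \in suppD R (~: S).
  by move: bZ; rewrite /ZD memv_cap => /andP[-> ->].
have [bx by0] := suppD_E bS.
rewrite memv_cap bigcap_P; apply/andP; split.
  by rewrite /ZD memv_cap bZc /=; apply: suppD_I => // d; rewrite inE.
apply/allP => z /vbasis_mem; rewrite memv_cap => /andP[/memv_addP[z1 z1G [z2 z2B ->]] zT].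
apply/eqP; rewrite pairingDl.
move: z1G zT; rewrite /ZG !memv_cap => /andP[_ /suppG_E [z1y z1x]] /andP[_ /suppG_E [zy _]].
rewrite (face_lemma z2B _ bZc bx); last first.
  by move=> d; have := zy d; rewrite ffunE z1y add0r.
rewrite addr0 /pairing big1 // => d _.
case: (boolP (d \in S)) => dS.
  by rewrite by0 ?mulr0 // inE dS.
by rewrite z1x ?mul0r.
Qed.

End B.

Section FG.
Variables (R : realType) (D : finType).
Local Notation mono := (@mono R D).
Variable f : mono -> mono.

Definition Gr (r : seq mono) (P : {freeg mono}) : {freeg mono} :=
  \sum_(k <- r) << coeff k P *g f k >>.

Lemma Gr_super r P : uniq r -> {subset dom P <= r} -> Gr r P = fgmapk f P.
Proof.
move=> ur sub; rewrite /Gr (bigID (fun k => k \in dom P)) /= [X in _ + X]big1 ?addr0.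
  rewrite -big_filter; apply: perm_big; apply: uniq_perm.
  - exact: filter_uniq.
  - exact: uniq_dom.
  - by move=> k; rewrite mem_filter; apply/andP/idP => [[]//|kd]; split=> //; apply: sub.
by move=> k kd; rewrite coeff_outdom // freegU0.
Qed.

Lemma fgmapkD P Q : fgmapk f (P + Q) = fgmapk f P + fgmapk f Q.
Proof.
set r := undup (dom P ++ dom Q ++ dom (P + Q)).
have ur : uniq r by apply: undup_uniq.
have s1 : {subset dom P <= r} by move=> k kd; rewrite mem_undup !mem_cat kd.
have s2 : {subset dom Q <= r} by move=> k kd; rewrite mem_undup !mem_cat kd !orbT.
have s3 : {subset dom (P + Q) <= r} by move=> k kd; rewrite mem_undup !mem_cat kd !orbT.
rewrite -(Gr_super ur s1) -(Gr_super ur s2) -(Gr_super ur s3).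
rewrite /Gr -big_split /=; apply: eq_bigr => k _.
by rewrite coeffD freegUD.
Qed.

Lemma fgmapk0 : fgmapk f 0 = 0.
Proof. by rewrite /fgmapk dom0 big_nil. Qed.

Lemma fgmapkU m : fgmapk f << m >> = << f m >>.
Proof. by rewrite /fgmapk domU1 big_seq1 coeffU eqxx mulr1. Qed.

Lemma fgmapk_sum (I : Type) (r : seq I) (Pr : pred I) (F : I -> mono) :
  fgmapk f (\sum_(i <- r | Pr i) << F i >>) = \sum_(i <- r | Pr i) << f (F i) >>.
Proof.
rewrite (big_morph (fgmapk f) fgmapkD fgmapk0); apply: eq_bigr => i _.
exact: fgmapkU.
Qed.
End FG.

Unset Implicit Arguments.

Theorem lemma5p1 (R : realType) (D : finType) (s a : {perm D}) :
  comb_map s a ->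
  @fgmapk R D (fun m => (m.1.1, m.2, m.1.2)) (@PGdual R D s a) =
  @fgmapk R D (fun m => (@perp R D s a m.1.1, m.1.2, m.2)) (@PG R D s a).
Proof.
case=> _ Ha _.
have aK : involutive a by move=> d; case: (Ha d).
have afix : forall d, a d != d by move=> d; case: (Ha d).
rewrite /PGdual /PG !fgmapk_sum /=.
rewrite [LHS](reindex_inj (inv_inj (@setCK D))) /=.
rewrite (eq_bigl (fun S => edge_set a S)); last first.
  move=> S; apply/idP/idP => [/(edge_setC aK)|/(edge_setC aK)//].
  by rewrite setCK.
apply: eq_bigr => S eS.
by rewrite (perp_eq R s aK afix eS) (dim_ZD R s aK eS) (dim_ZG R s aK eS).
Qed.
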